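(* Let $n,m\in\mathbb N$, $d:=\min\{n,m\}$, $\alpha\in[1,d]$, and $\mathcal S_\alpha:=\{xx^\ast:x\in\mathcal V_\alpha\}$. Then $\mathsf K_\alpha=\mathrm{cone}(\mathcal S_\alpha)$, i.e. the convex cone generated by $\mathcal S_\alpha$ is already closed.
   Context: For $\psi=\sum_{i,j}a_{ij}e_i\otimes f_j\in\mathbb C^n\otimes\mathbb C^m$, its Schmidt coefficients $s_1(\psi)\ge\dots\ge s_d(\psi)\ge0$ are the singular values of $[a_{ij}]$. For $\alpha\in[1,d]$ with $k=\lfloor\alpha\rfloor$, $\theta=\alpha-k$, $r=\lceil\alpha\rceil$, a unit vector $\psi$ is $\alpha$-admissible if $s_j(\psi)=0$ for $j\ge r+1$ and, when $\theta>0$, $s_{k+1}(\psi)\le\frac\theta k\sum_{j=1}^ks_j(\psi)$; $\mathcal V_\alpha$ is the set of these. $\mathrm{cone}(S)$ denotes the set of finite nonnegative combinations of elements of $S$, and $\mathsf K_\alpha$ is defined as the closure of $\mathrm{cone}(\mathcal S_\alpha)$. *)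

(* Defs.v *)
(* Complex numbers are R[i] (mathcomp
   real_closed `complex`) over an arbitrary R : realType, with the metric
   topology induced by the modulus; matrices carry the (product) topology of
   mathcomp-analysis. *)
From HB Require Import structures.
From mathcomp Require Import all_boot all_order all_algebra.
From mathcomp Require Import complex.
From mathcomp Require Import all_classical all_reals topology normedtype.
Import Order.TTheory GRing.Theory Num.Theory.
Import numFieldNormedType.Exports.

Set Implicit Arguments.
Unset Strict Implicit.
Unset Printing Implicit Defensive.

Local Open Scope ring_scope.
Local Open Scope classical_set_scope.

HB.instance Definition _ (R : realType) := PseudoPointedMetric.copy R[i] (R[i])^o.

Section Schmidt.
Variable R : realType.
Local Notation C := (R[i]).

(* psi = \sum_{ij} a_ij e_i (x) f_j in C^n (x) C^m is represented by its
   coefficient matrix a : 'M[C]_(n, m). *)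

Definition unit_tensor n m (a : 'M[C]_(n, m)) : Prop :=
  \sum_(i < n) \sum_(j < m) `|a i j| ^+ 2 = 1.

(* s (indexed 0 .. d-1, d = min n m) is the nonincreasing list of singular
   values of a: s_j >= 0, nonincreasing, and the s_j^2 (together with n - d
   zeros) are the eigenvalues, with multiplicity, of a a^*. *)
Definition schmidt_coeffs n m (a : 'M[C]_(n, m)) (s : 'I_(minn n m) -> R) : Prop :=
  [/\ forall j, 0 <= s j,
      forall i j : 'I_(minn n m), (i <= j)%N -> s j <= s i &
      char_poly (a *m (map_mx Num.conj a)^T)
        = \prod_(j < minn n m) ('X - ((s j) ^+ 2 +i* 0)%C%:P) * 'X^(n - minn n m)].

(* alpha-admissible unit vectors V_alpha.
   k = floor alpha, theta = alpha - k, r = ceil alpha; 1-based index j >= r+1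
   becomes 0-based index j >= r, and s_{k+1} becomes s_k (0-based). *)
Definition admissible n m (alpha : R) (a : 'M[C]_(n, m)) : Prop :=
  let k := Num.truncn alpha in
  let theta := alpha - k%:R in
  unit_tensor a /\
  exists s : 'I_(minn n m) -> R,
    [/\ schmidt_coeffs a s,
        forall j : 'I_(minn n m), (Num.ceil alpha <= (j : nat)%:Z)%R -> s j = 0 &
        0 < theta ->
        forall j : 'I_(minn n m), (j : nat) = k ->
          s j <= theta / k%:R * \sum_(i < minn n m | (i < k)%N) s i].

Definition V_alpha n m (alpha : R) : set 'M[C]_(n, m) := [set a | admissible alpha a].

(* x x^* as an operator on C^n (x) C^m = C^(n*m) (vectorised via mxvec). *)
Definition outer n m (a : 'M[C]_(n, m)) : 'M[C]_(n * m) :=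
  let v := (mxvec a)^T in v *m (map_mx Num.conj v)^T.

Definition S_alpha n m (alpha : R) : set 'M[C]_(n * m) :=
  [set outer a | a in @V_alpha n m alpha].

Definition cone N (S : set 'M[C]_N) : set 'M[C]_N :=
  [set M | exists (p : nat) (c : 'I_p -> R) (X : 'I_p -> 'M[C]_N),
     [/\ forall i, 0 <= c i, forall i, S (X i) &
         M = \sum_(i < p) (c i +i* 0)%C *: X i]].

Definition K_alpha n m (alpha : R) : set 'M[C]_(n * m) :=
  closure (cone (@S_alpha n m alpha)).

End Schmidt.

(* Main.v *)
Require Import Defs.
From HB Require Import structures.
From mathcomp Require Import all_boot all_order all_algebra.
From mathcomp Require Import complex.
From mathcomp Require Import ring lra zify.
From mathcomp Require Import all_classical all_reals topology normedtype.
Import Order.TTheory GRing.Theory Num.Theory.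
Import numFieldNormedType.Exports.
Local Open Scope ring_scope.
Set Implicit Arguments.
Unset Strict Implicit.
Unset Printing Implicit Defensive.
Local Open Scope classical_set_scope.
Local Open Scope complex_scope.

Section Top.
Variable R : realType.
Local Notation C := (R[i]).

Lemma hausC : hausdorff_space C.
Proof. exact: (@norm_hausdorff _ C^o). Qed.

Lemma haus_mx (T : topologicalType) a b :
  hausdorff_space T -> hausdorff_space 'M[T]_(a, b).
Proof.
move=> hT p q cl; apply/matrixP => i j; apply: hT => A B nA nB.
pose P1 := fun i' j' => if (i' == i) && (j' == j) then A else setT.
pose P2 := fun i' j' => if (i' == i) && (j' == j) then B else setT.
have h1 : nbhs p [set N : 'M[T]_(a, b) | forall i' j', P1 i' j' (N i' j')].
  exists P1 => // i' j'; rewrite /P1; case: ifP => [/andP[/eqP -> /eqP ->]//|_].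
  exact: filterT.
have h2 : nbhs q [set N : 'M[T]_(a, b) | forall i' j', P2 i' j' (N i' j')].
  exists P2 => // i' j'; rewrite /P2; case: ifP => [/andP[/eqP -> /eqP ->]//|_].
  exact: filterT.
have [N [HN1 HN2]] := cl _ _ h1 h2.
exists (N i j); split.
  by have := HN1 i j; rewrite /P1 !eqxx.
by have := HN2 i j; rewrite /P2 !eqxx.
Qed.

Lemma cont_mx (T : topologicalType) (U : topologicalType) a b
  (f : T -> 'M[U]_(a, b)) :
  (forall i j, continuous (fun w => f w i j)) -> continuous f.
Proof.
move=> hf x A [P HP sub].
have : \forall w \near x, forall ij : 'I_a * 'I_b, P ij.1 ij.2 (f w ij.1 ij.2).
  apply: filter_forall => -[i j] /=; exact: (hf i j x _ (HP i j)).
apply: filterS => w Hw; apply: sub => i j; exact: (Hw (i, j)).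
Qed.

Lemma cont_RC : continuous (fun x : R => x%:C).
Proof.
move=> x; apply/(@cvgrPdist_lt _ C^o) => e e0.
have eR : 0 < complex.Re e by move: e0; rewrite ltcE => /andP[].
have : \forall y \near x, `|x - y| < complex.Re e.
  have H : (fun y : R => y) @ x --> x := cvg_id.
  by move/cvgrPdist_lt : H => /(_ _ eR).
apply: filterS => y hy.
rewrite -rmorphB /= normc_def /= expr0n /= addr0 sqrtr_sqr.
rewrite ltcE /=; apply/andP; split.
  by move: e0; rewrite ltcE /= => /andP[/eqP ->].
done.
Qed.


Lemma cont_cplx (T : topologicalType) (f g : T -> R) :
  continuous f -> continuous g -> continuous (fun w => f w +i* g w).
Proof.
move=> cf cg.
have -> : (fun w => f w +i* g w) = (fun w => (f w)%:C + 'i * (g w)%:C).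
  apply: funext => w; apply/eqP; rewrite eq_complex /=; by simpc.
move=> w.
have h1 : {for w, continuous (fun w => (f w)%:C : C^o)}.
  exact: (continuous_comp (cf w) (@cont_RC _)).
have h2 : {for w, continuous (fun w => 'i * (g w)%:C : C)}.
  apply: (@continuousM C T (fun _ => 'i) (fun w => (g w)%:C)).
    exact: cvg_cst.
  exact: (continuous_comp (cg w) (@cont_RC _)).
exact: (@continuousD C C^o T _ _ w h1 h2).
Qed.
End Top.

Section Carath.
Variable R : realType.
Local Notation C := (R[i]).

Lemma Re_sum (I : Type) (r : seq I) (F : I -> C) :
  complex.Re (\sum_(i <- r) F i) = \sum_(i <- r) complex.Re (F i).
Proof.
elim: r => [|x r IH]; first by rewrite !big_nil.
by rewrite !big_cons -IH; case: (F x) => ? ?; case: (\sum_(j <- r) F j).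
Qed.

Lemma Im_sum (I : Type) (r : seq I) (F : I -> C) :
  complex.Im (\sum_(i <- r) F i) = \sum_(i <- r) complex.Im (F i).
Proof.
elim: r => [|x r IH]; first by rewrite !big_nil.
by rewrite !big_cons -IH; case: (F x) => ? ?; case: (\sum_(j <- r) F j).
Qed.

Lemma ReMl (l : R) (z : C) : complex.Re ((l +i* 0) * z) = l * complex.Re z.
Proof. by case: z => x y /=; rewrite mul0r subr0. Qed.
Lemma ImMl (l : R) (z : C) : complex.Im ((l +i* 0) * z) = l * complex.Im z.
Proof. by case: z => x y /=; rewrite mul0r addr0. Qed.

Variables a b : nat.
Definition Dim := #|{: 'I_a * 'I_b * bool}|.

Lemma lin_dep p (X : 'I_p -> 'M[C]_(a, b)) : (Dim < p)%N ->
  exists lam : 'I_p -> R, (exists i, lam i != 0) /\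
    \sum_(i < p) (lam i +i* 0) *: X i = 0.
Proof.
move=> hp.
pose V : 'M[R]_(p, Dim) := \matrix_(i, k)
  (let t := enum_val k in if t.2 then complex.Re (X i t.1.1 t.1.2)
                         else complex.Im (X i t.1.1 t.1.2)).
have nf : ~~ row_free V.
  rewrite /row_free; apply/negP => /eqP hr.
  by have := rank_leq_col V; rewrite hr leqNgt hp.
have kn : kermx V != 0 by rewrite kermx_eq0.
have [i [j hij]] : exists i j, kermx V i j != 0.
  have h0 : ~ (forall i j, kermx V i j = 0).
    by move=> h0; move/eqP: kn; apply; apply/matrixP => i j; rewrite h0 mxE.
  case: (pselect (exists i j, kermx V i j != 0)) => // hn; exfalso.
  apply: h0 => i j; apply/eqP/negPn/negP => h; apply: hn; by exists i, j.
have hK t : \sum_k kermx V i k * V k (enum_rank t) = 0.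
  by have /matrixP/(_ i (enum_rank t)) := mulmx_ker V; rewrite !mxE.
move: (kermx V) hij hK => K hij hK.
exists (fun k => K i k); split; first by exists j.
apply/matrixP => r s; rewrite summxE !mxE; apply/eqP; rewrite eq_complex.
apply/andP; split; apply/eqP.
  rewrite Re_sum /=; rewrite -[RHS](hK (r, s, true)); apply: eq_bigr => k _.
  by rewrite !mxE enum_rankK /= ReMl.
rewrite Im_sum /=; rewrite -[RHS](hK (r, s, false)); apply: eq_bigr => k _.
by rewrite !mxE enum_rankK /= ImMl.
Qed.

Lemma carath (S : set 'M[C]_(a, b)) p (c : 'I_p -> R) (X : 'I_p -> 'M[C]_(a, b)) :
  (forall i, 0 <= c i) -> (forall i, S (X i)) ->
  exists (c' : 'I_Dim -> R) (X' : 'I_Dim -> 'M[C]_(a, b)),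
    [/\ forall i, 0 <= c' i, forall i, c' i = 0 \/ S (X' i) &
       \sum_(i < p) (c i +i* 0) *: X i = \sum_(i < Dim) (c' i +i* 0) *: X' i].
Proof.
elim/ltn_ind: p c X => p IH c X hc hS.
case: (leqP p Dim) => hp.
  pose c' (i : 'I_Dim) := if @insub _ (fun k => (k < p)%N) 'I_p (nat_of_ord i) is Some j then c j else 0.
  pose X' (i : 'I_Dim) := if @insub _ (fun k => (k < p)%N) 'I_p (nat_of_ord i) is Some j then X j else 0.
  exists c', X'; split.
  - move=> i; rewrite /c'; case: insubP => [j _ _|_] //.
  - move=> i; rewrite /c' /X'; case: insubP => [j _ _|_]; [by right|by left].
  pose G (k : nat) := if @insub _ (fun k => (k < p)%N) 'I_p k is Some j then (c j +i* 0) *: X j else 0.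
  transitivity (\sum_(i < p) G i).
    apply: eq_bigr => i _; rewrite /G; case: insubP => [j _ /val_inj -> //|].
    by rewrite ltn_ord.
  rewrite (big_ord_widen _ G hp) big_mkcond /=; apply: eq_bigr => i _.
  rewrite /G /c' /X'; case: ifP => hi; first by case: (@insub _ (fun k => (k < p)%N) 'I_p (nat_of_ord i)) => [j|]; rewrite ?scaler0.
  case: insubP => [j|]; first by rewrite hi.
  by rewrite scale0r.
have [lam [[i1 hi1] hsum]] := lin_dep X hp.
pose mu i := if 0 < lam i1 then lam i else - lam i.
have hmu1 : 0 < mu i1.
  rewrite /mu; case: ifP => // /negbT; rewrite -leNgt le_eqVlt (negbTE hi1) /=.
  by rewrite oppr_gt0.
have hmus : \sum_(i < p) (mu i +i* 0) *: X i = 0.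
  rewrite /mu; case: (boolP (0 < lam i1)) => hl; first by [].
  transitivity (- \sum_(i < p) (lam i +i* 0) *: X i); last by rewrite hsum oppr0.
  rewrite -sumrN; apply: eq_bigr => i _; rewrite !complexr0 rmorphN /=.
  by rewrite scaleNr.
case: (@arg_minP _ _ _ i1 (fun i => 0 < mu i) (fun i => c i / mu i) hmu1).
move=> i0 hi0 hmin.
pose t := c i0 / mu i0.
have t0 : 0 <= t by rewrite /t divr_ge0 // ltW.
pose c2 i := c i - t * mu i.
have hc2 i : 0 <= c2 i.
  rewrite /c2 subr_ge0; case: (ltP 0 (mu i)) => hm.
    by have := hmin i hm; rewrite -/t ler_pdivlMr.
  by apply: le_trans (hc i); rewrite mulr_ge0_le0.
have hc20 : c2 i0 = 0 by rewrite /c2 /t divfK ?subrr // gt_eqF.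
have hsum2 : \sum_(i < p) (c i +i* 0) *: X i = \sum_(i < p) (c2 i +i* 0) *: X i.
  transitivity (\sum_(i < p) (c i +i* 0) *: X i - (t +i* 0) *: \sum_(i < p) (mu i +i* 0) *: X i).
    by rewrite hmus scaler0 subr0.
  rewrite scaler_sumr -sumrB; apply: eq_bigr => i _.
  by rewrite /c2 !complexr0 rmorphB /= scalerBl scalerA -rmorphM.
have hp1 : (p.-1 < p)%N by rewrite prednK ?ltnSn // (leq_ltn_trans _ hp).
have [c' [X' [h1 h2 h3]]] := IH p.-1 hp1 (fun i => c2 (lift i0 i)) (fun i => X (lift i0 i)) (fun i => hc2 _) (fun i => hS _).
exists c', X'; split => //.
rewrite hsum2 (bigD1_ord i0) //= hc20 scale0r add0r -h3.
by apply: eq_bigr.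
Qed.
End Carath.

Section Alg.
Variable R : realType.
Local Notation C := (R[i]).

Definition sq (z : C) : R := complex.Re z ^+ 2 + complex.Im z ^+ 2.

Lemma sq_normC (z : C) : `|z| ^+ 2 = (sq z)%:C.
Proof. by rewrite /sq add_Re2_Im2. Qed.

Lemma Re_mulJ (z : C) : complex.Re (z * Num.conj z) = sq z.
Proof. case: z => x y; rewrite /sq /=. ring. Qed.

Lemma sum_mxvec n m (V : nmodType) (F : C -> V) (a : 'M[C]_(n, m)) :
  \sum_k F (mxvec a 0 k) = \sum_i \sum_j F (a i j).
Proof.
rewrite (reindex (uncurry (@mxvec_index n m))) /=; last first.
  exact: curry_mxvec_bij.
rewrite pair_big /=; apply: eq_bigr => -[i j] _ /=; by rewrite mxvecE.
Qed.

Lemma unitR n m (a : 'M[C]_(n, m)) :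
  unit_tensor a <-> \sum_i \sum_j sq (a i j) = 1.
Proof.
rewrite /unit_tensor.
have -> : \sum_i \sum_j `|a i j| ^+ 2 = (\sum_i \sum_j sq (a i j))%:C.
  rewrite rmorph_sum; apply: eq_bigr => i _; rewrite rmorph_sum.
  by apply: eq_bigr => j _; rewrite sq_normC.
split; first by move=> /complexI.
by move=> ->.
Qed.

Lemma outerE n m (a : 'M[C]_(n, m)) k l :
  outer a k l = mxvec a 0 k * Num.conj (mxvec a 0 l).
Proof. by rewrite /outer !mxE big_ord1 !mxE. Qed.

Definition Lf N (X : 'M[C]_N) : R := \sum_k complex.Re (X k k).

Lemma L_outer n m (a : 'M[C]_(n, m)) : unit_tensor a -> Lf (outer a) = 1.
Proof.
move/unitR => h; rewrite /Lf -h.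
transitivity (\sum_k sq (mxvec a 0 k)).
  by apply: eq_bigr => k _; rewrite outerE Re_mulJ.
by rewrite (sum_mxvec (fun z => sq z)).
Qed.


Lemma tr_aa n m (a : 'M[C]_(n, m)) :
  \tr (a *m (map_mx Num.conj a)^T) = (\sum_i \sum_j sq (a i j))%:C.
Proof.
rewrite /mxtrace rmorph_sum; apply: eq_bigr => i _; rewrite !mxE rmorph_sum.
apply: eq_bigr => j _; rewrite !mxE -(@sqr_normc R) sq_normC. by [].
Qed.

Lemma schmidt_le1 n m (a : 'M[C]_(n, m)) s :
  unit_tensor a -> schmidt_coeffs a s -> forall j, 0 <= s j <= 1.
Proof.
move=> /unitR hu [hs0 _ hcp] j; rewrite hs0 /=.
have d0 : (0 < minn n m)%N by apply: leq_ltn_trans (ltn_ord j).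
have n0 : (0 < n)%N by move: d0; rewrite leq_min => /andP[].
have hdn : (minn n m <= n)%N by exact: geq_minl.
have := char_poly_trace (a *m (map_mx Num.conj a)^T) n0.
rewrite hcp tr_aa hu coefMXn.
have -> : (n.-1 < n - minn n m)%N = false.
  by apply/negbTE; rewrite -leqNgt; lia.
have -> : (n.-1 - (n - minn n m))%N = (minn n m).-1 by lia.
set f := fun j : 'I_(minn n m) => ((s j) ^+ 2 +i* 0).
rewrite (_ : \prod_(j < minn n m) ('X - (s j ^+ 2 +i* 0)%:P) =
             \prod_(x <- map f (enum 'I_(minn n m))) ('X - x%:P)); last first.
  by rewrite big_map big_enum.
have hsz : size (map f (enum 'I_(minn n m))) = minn n m by rewrite size_map size_enum_ord.
have hc := @coefPn_prod_XsubC C (map f (enum 'I_(minn n m))).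
rewrite hsz -lt0n in hc; rewrite hc // big_map big_enum /= => /oppr_inj h.
have hsum : \sum_(k < minn n m) s k ^+ 2 = 1.
  have := congr1 (@complex.Re R) h; rewrite Re_sum /= => <-.
  by apply: eq_bigr.
have : s j ^+ 2 <= 1.
  rewrite -hsum (bigD1 j) //= lerDl; apply: sumr_ge0 => k _; exact: sqr_ge0.
by rewrite expr_le1.
Qed.

End Alg.

Section Cont.
Variable R : realType.
Local Notation C := (R[i]).
Variable T : topologicalType.

Lemma contD (f g : T -> R) : continuous f -> continuous g ->
  continuous (fun w => f w + g w).
Proof. by move=> cf cg w; exact: (@continuousD R R^o T f g w (cf w) (cg w)). Qed.
Lemma contM (f g : T -> R) : continuous f -> continuous g ->
  continuous (fun w => f w * g w).
Proof. by move=> cf cg w; exact: (@continuousM R T f g w (cf w) (cg w)). Qed.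
Lemma contN (f : T -> R) : continuous f -> continuous (fun w => - f w).
Proof. by move=> cf w; exact: (@continuousN R R^o T f w (cf w)). Qed.
Lemma contC (r : R) : continuous (fun _ : T => r).
Proof. by move=> w; exact: cvg_cst. Qed.
Lemma contB (f g : T -> R) : continuous f -> continuous g ->
  continuous (fun w => f w - g w).
Proof. by move=> cf cg; apply: contD => //; exact: contN. Qed.
Lemma contX (f : T -> R) k : continuous f -> continuous (fun w => f w ^+ k).
Proof.
move=> cf; elim: k => [|k IH]; first by under eq_fun do rewrite expr0; exact: contC.
by under eq_fun do rewrite exprS; exact: contM.
Qed.
Lemma cont_sum (I : Type) (r : seq I) (F : I -> T -> R) :
  (forall i, continuous (F i)) -> continuous (fun w => \sum_(i <- r) F i w).
Proof.
move=> cF; elim: r => [|x r IH].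
  by under eq_fun do rewrite big_nil; exact: contC.
by under eq_fun do rewrite big_cons; exact: contD.
Qed.

Definition ccont (g : T -> C) :=
  continuous (fun w => complex.Re (g w)) /\ continuous (fun w => complex.Im (g w)).

Lemma ccontD g1 g2 : ccont g1 -> ccont g2 -> ccont (fun w => g1 w + g2 w).
Proof.
move=> [r1 i1] [r2 i2]; split.
  have -> : (fun w => complex.Re (g1 w + g2 w)) = (fun w => complex.Re (g1 w) + complex.Re (g2 w)).
    by apply: funext => w; case: (g1 w) => ? ?; case: (g2 w).
  exact: contD.
have -> : (fun w => complex.Im (g1 w + g2 w)) = (fun w => complex.Im (g1 w) + complex.Im (g2 w)).
  by apply: funext => w; case: (g1 w) => ? ?; case: (g2 w).
exact: contD.
Qed.

Lemma ccontM g1 g2 : ccont g1 -> ccont g2 -> ccont (fun w => g1 w * g2 w).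
Proof.
move=> [r1 i1] [r2 i2]; split.
  have -> : (fun w => complex.Re (g1 w * g2 w)) = (fun w => complex.Re (g1 w) * complex.Re (g2 w) - complex.Im (g1 w) * complex.Im (g2 w)).
    by apply: funext => w; case: (g1 w) => ? ?; case: (g2 w).
  by apply: contB; apply: contM.
have -> : (fun w => complex.Im (g1 w * g2 w)) = (fun w => complex.Re (g1 w) * complex.Im (g2 w) + complex.Im (g1 w) * complex.Re (g2 w)).
  by apply: funext => w; case: (g1 w) => ? ?; case: (g2 w).
by apply: contD; apply: contM.
Qed.

Lemma ccontN g : ccont g -> ccont (fun w => - g w).
Proof.
move=> [r1 i1]; split.
  have -> : (fun w => complex.Re (- g w)) = (fun w => - complex.Re (g w)).
    by apply: funext => w; case: (g w).
  exact: contN.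
have -> : (fun w => complex.Im (- g w)) = (fun w => - complex.Im (g w)).
  by apply: funext => w; case: (g w).
exact: contN.
Qed.

Lemma ccontJ g : ccont g -> ccont (fun w => Num.conj (g w)).
Proof.
move=> [r1 i1]; split.
  have -> : (fun w => complex.Re (Num.conj (g w))) = (fun w => complex.Re (g w)).
    by apply: funext => w; case: (g w).
  exact: r1.
have -> : (fun w => complex.Im (Num.conj (g w))) = (fun w => - complex.Im (g w)).
  by apply: funext => w; case: (g w).
exact: contN.
Qed.

Lemma ccontC z : ccont (fun _ => z).
Proof. by split; exact: contC. Qed.

Lemma ccontR (f g : T -> R) : continuous f -> continuous g -> ccont (fun w => f w +i* g w).
Proof. by move=> cf cg; split. Qed.

Lemma ccont_sum (I : Type) (r : seq I) (F : I -> T -> C) :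
  (forall i, ccont (F i)) -> ccont (fun w => \sum_(i <- r) F i w).
Proof.
move=> cF; elim: r => [|x r IH].
  by under eq_fun do rewrite big_nil; exact: ccontC.
by under eq_fun do rewrite big_cons; exact: ccontD.
Qed.

Lemma ccont_prod (I : Type) (r : seq I) (F : I -> T -> C) :
  (forall i, ccont (F i)) -> ccont (fun w => \prod_(i <- r) F i w).
Proof.
move=> cF; elim: r => [|x r IH].
  by under eq_fun do rewrite big_nil; exact: ccontC.
by under eq_fun do rewrite big_cons; exact: ccontM.
Qed.

Definition pcont (f : T -> {poly C}) := forall k, ccont (fun w => (f w)`_k).

Lemma pcontD f1 f2 : pcont f1 -> pcont f2 -> pcont (fun w => f1 w + f2 w).
Proof. by move=> h1 h2 k; under eq_fun do rewrite coefD; exact: ccontD. Qed.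

Lemma pcontN f : pcont f -> pcont (fun w => - f w).
Proof. by move=> h k; under eq_fun do rewrite coefN; exact: ccontN. Qed.

Lemma pcontM f1 f2 : pcont f1 -> pcont f2 -> pcont (fun w => f1 w * f2 w).
Proof.
move=> h1 h2 k; under eq_fun do rewrite coefM.
by apply: ccont_sum => i; apply: ccontM.
Qed.

Lemma pcontC p : pcont (fun _ => p).
Proof. by move=> k; exact: ccontC. Qed.

Lemma pcontP g : ccont g -> pcont (fun w => (g w)%:P).
Proof.
move=> h k; under eq_fun do rewrite coefC.
case: eqP => _; [exact: h|exact: ccontC].
Qed.

Lemma pcont_sum (I : Type) (r : seq I) (F : I -> T -> {poly C}) :
  (forall i, pcont (F i)) -> pcont (fun w => \sum_(i <- r) F i w).
Proof.
move=> cF; elim: r => [|x r IH].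
  by under eq_fun do rewrite big_nil; exact: pcontC.
by under eq_fun do rewrite big_cons; exact: pcontD.
Qed.

Lemma pcont_prod (I : Type) (r : seq I) (F : I -> T -> {poly C}) :
  (forall i, pcont (F i)) -> pcont (fun w => \prod_(i <- r) F i w).
Proof.
move=> cF; elim: r => [|x r IH].
  by under eq_fun do rewrite big_nil; exact: pcontC.
by under eq_fun do rewrite big_cons; exact: pcontM.
Qed.

Lemma pcont_det n (A : T -> 'M[{poly C}]_n) :
  (forall i j, pcont (fun w => A w i j)) -> pcont (fun w => \det (A w)).
Proof.
move=> hA; rewrite /determinant.
apply: pcont_sum => s.
apply: pcontM; first exact: pcontC.
by apply: pcont_prod => i; exact: hA.
Qed.

Lemma pcont_charpoly n (A : T -> 'M[C]_n) :
  (forall i j, ccont (fun w => A w i j)) -> pcont (fun w => char_poly (A w)).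
Proof.
move=> hA; apply: pcont_det => i j.
under eq_fun do rewrite /char_poly_mx !mxE.
apply: pcontD; first exact: pcontC.
by apply: pcontN; apply: pcontP.
Qed.


Lemma closed_all (I : Type) (A : I -> set T) :
  (forall i, closed (A i)) -> closed [set w | forall i, A i w].
Proof.
move=> hA; have -> : [set w | forall i, A i w] = \bigcap_(i in setT) A i.
  by apply/seteqP; split => w /= h i //; apply: h.
by apply: closed_bigI => i _; exact: hA.
Qed.

Lemma closed_imp (P : Prop) (A : set T) : closed A -> closed [set w | P -> A w].
Proof.
move=> hA; case: (pselect P) => hP.
  by have -> : [set w | P -> A w] = A by apply/seteqP; split => w /= h //; apply: h.
have -> : [set w | P -> A w] = setT by apply/seteqP; split => w //= _ /hP.
exact: closedT.
Qed.

Lemma closed_and (A B : set T) : closed A -> closed B -> closed [set w | A w /\ B w].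
Proof. by move=> hA hB; exact: (closedI hA hB). Qed.

Lemma closed_or (A B : set T) : closed A -> closed B -> closed [set w | A w \/ B w].
Proof. by move=> hA hB; exact: (closedU hA hB). Qed.

Lemma closed_eqR (f g : T -> R) : continuous f -> continuous g ->
  closed [set w | f w = g w].
Proof.
move=> cf cg.
have -> : [set w | f w = g w] = (fun w => f w - g w) @^-1` [set x | x = 0].
  by apply/seteqP; split => w /=; [move=> ->; rewrite subrr|move/eqP; rewrite subr_eq0 => /eqP].
by apply: (continuous_closedP _).1; [exact: contB|exact: closed_eq].
Qed.

Lemma closed_leR (f g : T -> R) : continuous f -> continuous g ->
  closed [set w | f w <= g w].
Proof.
move=> cf cg.
have -> : [set w | f w <= g w] = (fun w => f w - g w) @^-1` [set x | x <= 0].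
  by apply/seteqP; split => w /=; rewrite subr_le0.
by apply: (continuous_closedP _).1; [exact: contB|exact: closed_le].
Qed.

Lemma closed_eqC (g1 g2 : T -> C) : ccont g1 -> ccont g2 -> closed [set w | g1 w = g2 w].
Proof.
move=> [r1 i1] [r2 i2].
have -> : [set w | g1 w = g2 w] = [set w | complex.Re (g1 w) = complex.Re (g2 w) /\ complex.Im (g1 w) = complex.Im (g2 w)].
  apply/seteqP; split => w /=; first by move=> ->.
  by case: (g1 w) => ? ?; case: (g2 w) => ? ? /= [-> ->].
by apply: closed_and; apply: closed_eqR.
Qed.

Lemma closed_eqP (p1 p2 : T -> {poly C}) : pcont p1 -> pcont p2 -> closed [set w | p1 w = p2 w].
Proof.
move=> h1 h2.
have -> : [set w | p1 w = p2 w] = [set w | forall k, (p1 w)`_k = (p2 w)`_k].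
  by apply/seteqP; split => w /=; [move=> -> | move/polyP].
by apply: closed_all => k; apply: closed_eqC.
Qed.

End Cont.

Import ArrowAsProduct.

Section Main.
Variable R : realType.
Local Notation C := (R[i]).
Variables (n m : nat) (alpha : R).
Local Notation d := (minn n m).
Local Notation N := (n * m)%N.

Definition adm_s (a : 'M[C]_(n, m)) (s : 'I_d -> R) : Prop :=
  let k := Num.truncn alpha in
  let theta := alpha - k%:R in
  unit_tensor a /\
    [/\ schmidt_coeffs a s,
        forall j : 'I_(minn n m), (Num.ceil alpha <= (j : nat)%:Z)%R -> s j = 0 &
        0 < theta ->
        forall j : 'I_(minn n m), (j : nat) = k ->
          s j <= theta / k%:R * \sum_(i < minn n m | (i < k)%N) s i].

Lemma admE a : admissible alpha a <-> exists s, adm_s a s.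
Proof.
split; first by case=> hu [s hs]; exists s.
by case=> s [hu hs]; split => //; exists s.
Qed.

Definition adm_r (a : 'M[C]_(n, m)) (s : 'I_d -> R) : Prop :=
  let k := Num.truncn alpha in
  let theta := alpha - k%:R in
  [/\ \sum_i \sum_j sq (a i j) = 1,
      (forall j, 0 <= s j) /\ (forall i j : 'I_(minn n m), (i <= j)%N -> s j <= s i),
      char_poly (a *m (map_mx Num.conj a)^T)
        = \prod_(j < minn n m) ('X - ((s j) ^+ 2 +i* 0)%:P) * 'X^(n - minn n m),
      forall j : 'I_(minn n m), (Num.ceil alpha <= (j : nat)%:Z)%R -> s j = 0 &
        0 < theta ->
        forall j : 'I_(minn n m), (j : nat) = k ->
          s j <= theta / k%:R * \sum_(i < minn n m | (i < k)%N) s i].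

Lemma adm_rE a s : adm_s a s <-> adm_r a s.
Proof.
split.
  by case=> /unitR hu [[h1 h2 h3] h4 h5]; split.
by case=> /unitR hu [h1 h2] h3 h4 h5; split.
Qed.

Definition Pn := Dim N N.
Definition Crd := option (('I_n * 'I_m * bool) + 'I_d).
Definition J := ('I_Pn * Crd)%type.
Local Notation Om := (J -> R).

Definition cc (w : Om) i := w (i, None).
Definition aa (w : Om) i : 'M[C]_(n, m) :=
  \matrix_(j, k) (w (i, Some (inl (j, k, true))) +i* w (i, Some (inl (j, k, false)))).
Definition ss (w : Om) i : 'I_d -> R := fun j => w (i, Some (inr j)).
Definition Phi (w : Om) : 'M[C]_N := \sum_(i < Pn) (cc w i +i* 0) *: outer (aa w i).

Lemma cont_proj x : continuous (fun w : Om => w x).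
Proof. exact: (@proj_continuous J (fun _ => R) x). Qed.

Lemma ccont_aa i j k : ccont (fun w => aa w i j k).
Proof.
have -> : (fun w => aa w i j k) = (fun w => w (i, Some (inl (j, k, true))) +i* w (i, Some (inl (j, k, false)))).
  by apply: funext => w; rewrite mxE.
by apply: ccontR; apply: cont_proj.
Qed.

Lemma cont_of_ccont (T : topologicalType) (g : T -> C) : ccont g -> continuous g.
Proof.
case=> h1 h2.
have -> : g = (fun w => complex.Re (g w) +i* complex.Im (g w)).
  by apply: funext => w; case: (g w).
exact: cont_cplx.
Qed.

Lemma cont_Phi : continuous Phi.
Proof.
apply: cont_mx => k l; apply: cont_of_ccont.
have -> : (fun w => Phi w k l) = (fun w => \sum_(i < Pn) (cc w i +i* 0) * (mxvec (aa w i) 0 k * Num.conj (mxvec (aa w i) 0 l))).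
  apply: funext => w; rewrite /Phi summxE; apply: eq_bigr => i _.
  by rewrite mxE outerE.
apply: ccont_sum => i; apply: ccontM.
  by apply: ccontR; [exact: cont_proj|exact: contC].
have hv k' : ccont (fun w => mxvec (aa w i) 0 k').
  case/mxvec_indexP: k' => j j'.
  have -> : (fun w => mxvec (aa w i) 0 (mxvec_index j j')) = (fun w => aa w i j j').
    by apply: funext => w; rewrite mxvecE.
  exact: ccont_aa.
by apply: ccontM; [exact: hv|apply: ccontJ; exact: hv].
Qed.


Lemma closed_adm i : closed [set w : Om | adm_r (aa w i) (ss w i)].
Proof.
have cs j : continuous (fun w : Om => ss w i j) by exact: cont_proj.
have -> : [set w : Om | adm_r (aa w i) (ss w i)] =
  [set w | (\sum_j \sum_k sq (aa w i j k) = 1) /\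
   (((forall j, 0 <= ss w i j) /\ (forall j1 j2 : 'I_d, (j1 <= j2)%N -> ss w i j2 <= ss w i j1)) /\
   ((char_poly (aa w i *m (map_mx Num.conj (aa w i))^T)
        = \prod_(j < d) ('X - ((ss w i j) ^+ 2 +i* 0)%:P) * 'X^(n - d)) /\
   ((forall j : 'I_d, (Num.ceil alpha <= (j : nat)%:Z)%R -> ss w i j = 0) /\
   (0 < alpha - (Num.truncn alpha)%:R ->
        forall j : 'I_d, (j : nat) = Num.truncn alpha ->
          ss w i j <= (alpha - (Num.truncn alpha)%:R) / (Num.truncn alpha)%:R *
            \sum_(i0 < d | (i0 < Num.truncn alpha)%N) ss w i i0))))].
  apply/seteqP; split => w /=.
    by case=> h1 h2 h3 h4 h5.
  by case=> h1 [h2 [h3 [h4 h5]]]; split.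
apply: closed_and.
  apply: closed_eqR; last exact: contC.
  apply: cont_sum => j; apply: cont_sum => k.
  have [h1 h2] := ccont_aa i j k.
  by rewrite /sq; apply: contD; apply: contX.
apply: closed_and.
  apply: closed_and.
    by apply: closed_all => j; apply: closed_leR; [exact: contC|exact: cs].
  apply: closed_all => j1; apply: closed_all => j2; apply: closed_imp.
  by apply: closed_leR; exact: cs.
apply: closed_and.
  apply: closed_eqP.
    apply: pcont_charpoly => j j'.
    have -> : (fun w : Om => (aa w i *m (map_mx Num.conj (aa w i))^T) j j') =
       (fun w => \sum_k aa w i j k * Num.conj (aa w i j' k)).
      by apply: funext => w; rewrite !mxE; apply: eq_bigr => k _; rewrite !mxE.
    apply: ccont_sum => k; apply: ccontM; first exact: ccont_aa.
    by apply: ccontJ; exact: ccont_aa.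
  apply: pcontM; last exact: pcontC.
  apply: pcont_prod => j; apply: pcontD; first exact: pcontC.
  apply: pcontN; apply: pcontP; apply: ccontR; last exact: contC.
  by apply: contX; exact: cs.
apply: closed_and.
  apply: closed_all => j; apply: closed_imp.
  by apply: closed_eqR; [exact: cs|exact: contC].
apply: closed_imp; apply: closed_all => j; apply: closed_imp.
apply: closed_leR; first exact: cs.
apply: contM; first exact: contC.
have -> : (fun w : Om => \sum_(i0 < d | (i0 < Num.truncn alpha)%N) ss w i i0) =
  (fun w => \sum_(i0 < d) (if (i0 < Num.truncn alpha)%N then ss w i i0 else 0)).
  by apply: funext => w; rewrite big_mkcond.
apply: cont_sum => j'; case: (nat_of_ord j' < Num.truncn alpha)%N; [exact: cs|exact: contC].
Qed.

Definition Kset (B : R) : set Om :=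
  [set w | (forall x, `[-B, B]%classic (w x)) /\
           forall i, 0 <= cc w i /\ (cc w i = 0 \/ adm_r (aa w i) (ss w i))].

Lemma compact_K B : compact (Kset B).
Proof.
have -> : Kset B = [set w : Om | forall x, `[-B, B]%classic (w x)] `&`
    [set w | forall i, 0 <= cc w i /\ (cc w i = 0 \/ adm_r (aa w i) (ss w i))].
  by apply/seteqP; split => w [].
apply: compact_closedI.
  exact: (@tychonoff J (fun _ => R) (fun _ => `[-B, B]%classic) (fun _ => @segment_compact R (-B) B)).
apply: closed_all => i; apply: closed_and.
  by apply: closed_leR; [exact: contC|exact: cont_proj].
apply: closed_or; last exact: closed_adm.
by apply: closed_eqR; [exact: cont_proj|exact: contC].
Qed.

Lemma closed_PhiK B : closed (Phi @` Kset B).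
Proof.
apply: compact_closed; first exact: haus_mx (@hausC R).
apply: continuous_compact; last exact: compact_K.
exact: continuous_subspaceT cont_Phi.
Qed.


Lemma PhiK_cone B : Phi @` Kset B `<=` cone (@S_alpha R n m alpha).
Proof.
move=> _ [w [hbox hw] <-].
have adm_S a s : adm_r a s -> @S_alpha R n m alpha (outer a).
  by move=> h; exists a => //; apply/admE; exists s; apply/adm_rE.
case: (pselect (exists i, adm_r (aa w i) (ss w i))) => [[i0 h0]|hn].
  exists Pn, (cc w), (fun i => if pselect (adm_r (aa w i) (ss w i)) is left _ then outer (aa w i) else outer (aa w i0)).
  split.
  - by move=> i; exact: (hw i).1.
  - by move=> i; case: pselect => h; [exact: (adm_S _ _ h)|exact: (adm_S _ _ h0)].
  rewrite /Phi; apply: eq_bigr => i _; case: pselect => h //.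
  by have [_ [->|//]] := hw i; rewrite !scale0r.
exists 0%N, (fun _ => 0), (fun _ => 0); split; try by move=> [].
rewrite big_ord0 /Phi big1 // => i _; have [_ [->|h]] := hw i; first by rewrite scale0r.
by exfalso; apply: hn; exists i.
Qed.


Lemma Lf_lin p (c : 'I_p -> R) (X : 'I_p -> 'M[C]_N) :
  Lf (\sum_i (c i +i* 0) *: X i) = \sum_i c i * Lf (X i).
Proof.
rewrite /Lf.
under eq_bigr do rewrite summxE Re_sum.
rewrite exchange_big; apply: eq_bigr => i _; rewrite mulr_sumr.
by apply: eq_bigr => k _; rewrite mxE ReMl.
Qed.

Lemma sq_ge0 (z : C) : 0 <= sq z.
Proof. by rewrite /sq addr_ge0 // sqr_ge0. Qed.

Lemma sq_le1 (a : 'M[C]_(n, m)) j k : \sum_i \sum_j sq (a i j) = 1 -> sq (a j k) <= 1.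
Proof.
move=> <-; rewrite (bigD1 j) //= (bigD1 k) //= -addrA lerDl.
apply: addr_ge0; first by apply: sumr_ge0 => ? _; exact: sq_ge0.
by apply: sumr_ge0 => ? _; apply: sumr_ge0 => ? _; exact: sq_ge0.
Qed.

Lemma cone_sub_PhiK B : 1 <= B ->
  cone (@S_alpha R n m alpha) `&` [set X | Lf X < B] `<=` Phi @` Kset B.
Proof.
move=> hB M [[p [c [X [hc hS ->]]]] hL].
have [c' [X' [hc' hX' hsum]]] := carath hc hS.
rewrite hsum in hL *.
have hQ : forall i, exists q : 'M[C]_(n, m) * ('I_d -> R),
    (c' i = 0 /\ q = (0, fun _ => 0)) \/ (adm_r q.1 q.2 /\ X' i = outer q.1).
  move=> i; case: (hX' i) => [h0|[a ha <-]]; first by exists (0, fun _ => 0); left.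
  by move/admE: ha => [s /adm_rE hs]; exists (a, s); right.
case: (choice hQ) => Q hQ'.
pose w : Om := fun x => match x with
  | (i, None) => c' i
  | (i, Some (inl (j, k, b))) => if b then complex.Re ((Q i).1 j k) else complex.Im ((Q i).1 j k)
  | (i, Some (inr j)) => (Q i).2 j end.
have haa i : aa w i = (Q i).1.
  by apply/matrixP => j k; rewrite mxE /=; case: ((Q i).1 j k).
have hss i : ss w i = (Q i).2 by [].
have hcc i : cc w i = c' i by [].
have hLf : Lf (\sum_i (c' i +i* 0) *: X' i) = \sum_i c' i.
  rewrite Lf_lin; apply: eq_bigr => i _; case: (hQ' i) => [[-> _]|[ha ->]].
    by rewrite !mul0r.
  by rewrite L_outer ?mulr1 //; apply/unitR; case: ha.
rewrite /= hLf in hL.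
exists w; last first.
  rewrite /Phi; apply: eq_bigr => i _; rewrite hcc haa.
  by case: (hQ' i) => [[-> _]|[_ ->]]; rewrite ?scale0r.
split.
  have hb (x : R) : x ^+ 2 <= 1 -> -B <= x <= B.
    move=> hx; apply/andP; split; nra.
  case=> i [[[[j k] b]|j]|] /=; rewrite in_itv /=.
  - case: (hQ' i) => [[_ ->]|[[hu _ _ _ _] _]].
      by case: b; rewrite /= mxE /= oppr_le0 (le_trans ler01 hB).
    have := sq_le1 j k hu; rewrite /sq => h.
    case: b; apply: hb.
      by apply: le_trans h; rewrite lerDl sqr_ge0.
    by apply: le_trans h; rewrite lerDr sqr_ge0.
  - case: (hQ' i) => [[_ ->]|[ha _]].
      by rewrite /= oppr_le0 (le_trans ler01 hB).
    have [hu hsc] : unit_tensor (Q i).1 /\ schmidt_coeffs (Q i).1 (Q i).2.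
      by case/adm_rE: ha => ? [].
    have /andP[h1 h2] := schmidt_le1 hu hsc j.
    apply/andP; split; last exact: le_trans h2 hB.
    by apply: le_trans h1; rewrite oppr_le0 (le_trans ler01 hB).
  - have hci : c' i <= \sum_i c' i.
      by rewrite (bigD1 i) //= lerDl; apply: sumr_ge0 => ? _.
    apply/andP; split; last exact: ltW (le_lt_trans hci hL).
    by apply: le_trans (hc' i); rewrite oppr_le0 (le_trans ler01 hB).
move=> i; rewrite hcc; split; first exact: hc'.
case: (hQ' i) => [[h0 _]|[ha _]]; [by left|right].
by rewrite haa hss.
Qed.

End Main.

Lemma cont_entry (T : topologicalType) a b (i : 'I_a) (j : 'I_b) :
  continuous (fun X : 'M[T]_(a, b) => X i j).
Proof.
move=> X A hA.
exists (fun i' j' => if (i' == i) && (j' == j) then A else setT).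
  move=> i' j'; case: ifP => [/andP[/eqP -> /eqP ->]|_] //; exact: filterT.
by move=> Y hY; have := hY i j; rewrite !eqxx.
Qed.

Lemma cont_Re (R : realType) : continuous (fun z : R[i] => complex.Re z).
Proof.
move=> z; apply/(@cvgrPdist_lt _ R^o _ (nbhs z) (nbhs_filter z)) => e e0.
have e0C : (0 : R[i]) < e%:C by rewrite ltcR.
have := (@cvgrPdist_lt _ (R[i])^o _ (nbhs (z : (R[i])^o)) _ id z).1 cvg_id _ e0C.
move=> h; have {}h := h (nbhs_filter (z : (R[i])^o)).
apply: filterS h => y hy.
have h1 := normc_ge_Re (z - y).
have : `|complex.Re (z - y)|%:C < e%:C := le_lt_trans h1 hy.
rewrite ltcR.
by have -> : complex.Re (z - y) = complex.Re z - complex.Re y by case: z {hy h1}; case: y.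
Qed.

Lemma cont_Lf (R : realType) N : continuous (@Lf R N).
Proof.
apply: cont_sum => k.
move=> X; apply: continuous_comp; first exact: cont_entry.
exact: cont_Re.
Qed.

Unset Implicit Arguments.
Local Close Scope complex_scope.

Theorem corollary3p6 (R : realType) (n m : nat) (alpha : R) :
  1 <= alpha -> alpha <= (minn n m)%:R ->
  @K_alpha R n m alpha = cone (@S_alpha R n m alpha).
Proof.
move=> _ _; rewrite /K_alpha; apply/seteqP; split; last exact: subset_closure.
move=> M hM.
pose B := Num.max 1 (Lf M + 1).
have hB1 : 1 <= B by rewrite le_max lexx.
have hLM : Lf M < B by rewrite lt_max ltrDl ltr01 orbT.
pose U := [set X : 'M[R[i]]_(n * m) | Lf X < B].
have oU : open U.
  have -> : U = (@Lf R (n * m)) @^-1` [set x | x < B] by [].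
  by apply: (continuousP _).1; [exact: cont_Lf|exact: open_lt].
have hc : closure (cone (@S_alpha R n m alpha) `&` U) M.
  move=> V nV.
  have nU : nbhs M U by apply: open_nbhs_nbhs; split.
  have [X [hX1 [hX2 hX3]]] := hM _ (filterI nU nV).
  by exists X; split => //; split.
apply: (@PhiK_cone R n m alpha B).
have hcl := (closure_id _).1 (@closed_PhiK R n m alpha B).
rewrite hcl; move: hc; apply: closureS.
exact: cone_sub_PhiK.
Qed.
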